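(* For relatively prime integers $r, s$ put $u = r^2 + s^2$, $v = 2r^2 - s^2$, and let \[ \mathcal{S} = \{\pm u(u+v),\ \pm u(u-v),\ \pm v(u+v),\ \pm v(u-v)\}. \] Then for all but finitely many pairs $(r,s)$ of relatively prime integers with $r \neq 0$, the eight elements of $\mathcal{S}$ represent eight pairwise distinct classes in $\mathbb{Q}^\times/(\mathbb{Q}^\times)^2$.
   Context: $\mathbb{Q}^\times/(\mathbb{Q}^\times)^2$ denotes the group of nonzero rationals modulo nonzero squares; two nonzero rationals represent the same class iff their quotient is a square of a rational. *)

(* Defs.v *)
From mathcomp Require Import all_boot all_order all_algebra.
Set Implicit Arguments. Unset Strict Implicit. Unset Printing Implicit Defensive.
Import Order.TTheory GRing.Theory Num.Theory.
Local Open Scope ring_scope.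

Definition sq_equiv (a b : rat) : Prop := exists q : rat, q != 0 /\ a = b * q ^+ 2.

Definition S_list (r s : int) : seq int :=
  let u := r ^+ 2 + s ^+ 2 in
  let v := 2 * r ^+ 2 - s ^+ 2 in
  [:: u * (u + v); - (u * (u + v)); u * (u - v); - (u * (u - v));
      v * (u + v); - (v * (u + v)); v * (u - v); - (v * (u - v))].

Definition distinct_sq_classes (l : seq rat) : Prop :=
  (forall x, x \in l -> x != 0) /\
  (forall i j : nat, (i < size l)%N -> (j < size l)%N -> i != j ->
     ~ sq_equiv (nth 0 l i) (nth 0 l j)).

(* Main.v *)
Require Import Defs.
From mathcomp Require Import all_boot all_order all_algebra.
Import Order.TTheory GRing.Theory Num.Theory.
Local Open Scope ring_scope.
Set Warnings "-notation-overridden -ambiguous-paths".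
From mathcomp Require Import zify ring lra.
Local Close Scope ring_scope.

Lemma gcdnXX (a b k : nat) : gcdn (a ^ k) (b ^ k) = (gcdn a b) ^ k.
Proof.
have [g0|gpos] := posnP (gcdn a b).
  move/eqP: g0; rewrite eqn0Ngt gcdn_gt0 negb_or -!eqn0Ngt => /andP[/eqP-> /eqP->].
  by rewrite gcdnn.
set g := gcdn a b.
have gdef : g = gcdn a b by [].
clearbody g.
have Ea : a = (a %/ g) * g by rewrite divnK // gdef dvdn_gcdl.
have Eb : b = (b %/ g) * g by rewrite divnK // gdef dvdn_gcdr.
have {}Ea : a = (a %/ g) * g := Ea. move: (a %/ g) Ea => a' Ea.
move: (b %/ g) Eb => b' Eb.
have cab : coprime a' b'.
  have H := muln_gcdl a' b' g; rewrite -Ea -Eb -gdef in H.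
  by move/eqP: H; rewrite -{2}[g]mul1n eqn_pmul2r ?gdef.
rewrite Ea Eb !expnMn -muln_gcdl.
by move: cab => /(coprimeXl k) /(coprimeXr k) /eqP ->; rewrite mul1n.
Qed.

Lemma pow_of_coprime (x y z k : nat) : 0 < k -> coprime x y -> x * y = z ^ k ->
  x = (gcdn x z) ^ k.
Proof.
move=> k0 cxy E.
rewrite -gcdnXX -E.
have -> : x ^ k = x * x ^ k.-1 by rewrite -expnS prednK.
rewrite -muln_gcdr.
have /eqP -> : coprime (x ^ k.-1) y by apply: coprimeXl.
by rewrite muln1.
Qed.

Lemma pmod (x d k : nat) : x ^ k %% d = (x %% d) ^ k %% d.
Proof. by rewrite modnXm. Qed.

Lemma mod4_plus (r s n : nat) : odd r || odd s -> n^2 + s^4 <> 2*r^4 + r^2*s^2.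
Proof.
move=> H E.
have E' : (n^2 + s^4) %% 4 = (2*r^4 + r^2*s^2) %% 4 by rewrite E.
rewrite -modnDm -[RHS]modnDm -[2*r^4 %% 4]modnMm -[r^2*s^2 %% 4]modnMm in E'.
rewrite (pmod n) (pmod s 4 4) (pmod r 4 4) (pmod r 4 2) (pmod s 4 2) in E'.
rewrite -(odd_mod r (erefl false : odd 4 = false)) -(odd_mod s (erefl false : odd 4 = false)) in H.
have hr := ltn_pmod r (isT : 0 < 4). have hs := ltn_pmod s (isT : 0 < 4).
have hn := ltn_pmod n (isT : 0 < 4).
move: (r %% 4) (s %% 4) (n %% 4) hr hs hn H E' => a b c.
by case: a => [|[|[|[|a]]]] //; case: b => [|[|[|[|b]]]] //; case: c => [|[|[|[|c]]]].
Qed.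

Lemma mod4_minus (r s n : nat) : odd r -> n^2 + r^2*s^2 + 2*r^4 <> s^4.
Proof.
move=> H E.
have E' : (n^2 + r^2*s^2 + 2*r^4) %% 4 = (s^4) %% 4 by rewrite E.
rewrite -modnDm -[(n^2 + r^2*s^2) %% 4]modnDm -[2*r^4 %% 4]modnMm -[r^2*s^2 %% 4]modnMm in E'.
rewrite (pmod n) (pmod s 4 4) (pmod r 4 4) (pmod r 4 2) (pmod s 4 2) in E'.
rewrite -(odd_mod r (erefl false : odd 4 = false)) in H.
have hr := ltn_pmod r (isT : 0 < 4). have hs := ltn_pmod s (isT : 0 < 4).
have hn := ltn_pmod n (isT : 0 < 4).
move: (r %% 4) (s %% 4) (n %% 4) hr hs hn H E' => a b c.
by case: a => [|[|[|[|a]]]] //; case: b => [|[|[|[|b]]]] //; case: c => [|[|[|[|c]]]].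
Qed.

Lemma mod3_u (r s : nat) : ~~ (3 %| r) || ~~ (3 %| s) -> ~~ (3 %| r^2 + s^2).
Proof.
rewrite /dvdn -modnDm (pmod r) (pmod s).
have hr := ltn_pmod r (isT : 0 < 3). have hs := ltn_pmod s (isT : 0 < 3).
move: (r %% 3) (s %% 3) hr hs => a b.
by case: a => [|[|[|a]]] //; case: b => [|[|[|b]]].
Qed.

Lemma mod3_v (r s V : nat) : ~~ (3 %| r) || ~~ (3 %| s) ->
  (V + s^2 = 2*r^2 \/ V + 2*r^2 = s^2) -> ~~ (3 %| V).
Proof.
move=> H [E|E]; [have E' : (V + s^2) %% 3 = (2*r^2) %% 3 by rewrite E
               | have E' : (V + 2*r^2) %% 3 = (s^2) %% 3 by rewrite E];
  rewrite /dvdn; move: H E'; rewrite /dvdn -modnDm -?[2*r^2 %% 3]modnMm (pmod r) (pmod s);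
have hr := ltn_pmod r (isT : 0 < 3); have hs := ltn_pmod s (isT : 0 < 3);
have hv := ltn_pmod V (isT : 0 < 3);
move: (r %% 3) (s %% 3) (V %% 3) hr hs hv => a b c;
by case: a => [|[|[|a]]] //; case: b => [|[|[|b]]] //; case: c => [|[|[|c]]].
Qed.

Lemma mod3_desc (q m n : nat) : ~~ (3 %| q) -> q^2 + m^2 * n^2 + n^4 <> 2 * m^4.
Proof.
move=> H E.
have E' : (q^2 + m^2 * n^2 + n^4) %% 3 = (2 * m^4) %% 3 by rewrite E.
rewrite -modnDm -[(q^2 + m^2 * n^2) %% 3]modnDm -[2 * m^4 %% 3]modnMm -[m^2 * n^2 %% 3]modnMm in E'.
rewrite (pmod q) (pmod n 3 4) (pmod m 3 4) (pmod m 3 2) (pmod n 3 2) in E'.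
move: H; rewrite /dvdn => H.
have hr := ltn_pmod q (isT : 0 < 3). have hs := ltn_pmod m (isT : 0 < 3).
have hn := ltn_pmod n (isT : 0 < 3).
move: (q %% 3) (m %% 3) (n %% 3) hr hs hn H E' => a b c.
by case: a => [|[|[|a]]] //; case: b => [|[|[|b]]] //; case: c => [|[|[|c]]].
Qed.


Lemma splitc (c e X Y P : nat) : 0 < c -> 0 < e -> coprime X Y -> X * Y = c * P^e ->
  c %| X -> exists m n, [/\ X = c * m^e, Y = n^e, P = m * n & coprime m n].
Proof.
move=> c0 e0 cXY E cX.
have EX : X = c * (X %/ c) by rewrite mulnC divnK.
move: (X %/ c) EX => X' EX.
have E' : X' * Y = P ^ e.
  by apply/eqP; rewrite -(eqn_pmul2l c0) mulnA -EX E.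
have c' : coprime X' Y.
  by apply: coprime_dvdl cXY; rewrite EX dvdn_mull.
have HX := pow_of_coprime _ _ _ _ e0 c' E'.
have HY := pow_of_coprime _ _ _ _ e0 (_ : coprime Y X') (etrans (mulnC Y X') E').
  rewrite coprime_sym in HY; have {}HY := HY c'.
exists (gcdn X' P), (gcdn Y P).
have cmn : coprime (gcdn X' P) (gcdn Y P).
  by move: c'; rewrite {1}HX {1}HY coprime_pexpl // coprime_pexpr.
split => //; first by rewrite EX -HX.
apply/eqP; rewrite -(eqn_exp2r _ _ e0) expnMn -HX -HY E' //.
Qed.

Lemma halfE (a b : nat) : b <= a -> odd a = odd b -> a = b + 2 * (a - b)./2.
Proof.
move=> ba hab.
have : ~~ odd (a - b) by rewrite oddB // hab addbb.
move=> h; have := odd_double_half (a - b); rewrite (negbTE h) add0n -muln2.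
lia.
Qed.

Lemma descent (N : nat) : forall r s t, (r <= N)%N -> 0 < r -> coprime r s ->
  t^2 + r^2 * s^2 + 2 * r^4 = s^4 -> False.
Proof.
elim: N => [|N IH] r s t rN r0 crs E; first by lia.
have re : ~~ odd r by apply/negP => ro; exact: (mod4_minus r s t ro E).
have so : odd s.
  apply/negPn/negP => se.
  move: crs; rewrite /coprime => /eqP g1.
  have : 2 %| gcdn r s by rewrite dvdn_gcd !dvdn2 re se.
  by rewrite g1.
have le2 : 2 * r^2 <= s^2 by nia.
set U := r^2 + s^2. set W := s^2 - 2 * r^2.
have EW : U * W = t^2 by rewrite /U /W; nia.
have hU : ~~ (3 %| U).
  apply: mod3_u; rewrite -negb_and; apply/negP => /andP[h1 h2].
  move: crs; rewrite /coprime => /eqP g1.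
  have : 3 %| gcdn r s by rewrite dvdn_gcd h1 h2.
  by rewrite g1.
have cUW : coprime U W.
  have g3 : gcdn U W %| 3.
    have e1 : 3 * s^2 = 2 * U + W by rewrite /U /W; lia.
    have e2 : U = W + 3 * r^2 by rewrite /U /W; lia.
    have d1 : gcdn U W %| 3 * s^2 by rewrite e1 dvdn_add ?dvdn_mull ?dvdn_gcdl ?dvdn_gcdr.
    have d2 : gcdn U W %| 3 * r^2.
      by rewrite -(dvdn_addr _ (dvdn_gcdr U W)) -e2 dvdn_gcdl.
    have : gcdn U W %| gcdn (3 * r^2) (3 * s^2) by rewrite dvdn_gcd d1 d2.
    rewrite -muln_gcdr.
    have /eqP -> : coprime (r^2) (s^2) by rewrite coprime_pexpl // coprime_pexpr.
    by rewrite muln1.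
  have c3 : coprime 3 U by rewrite prime_coprime.
  have : gcdn U W %| gcdn 3 U by rewrite dvdn_gcd g3 dvdn_gcdl.
  by rewrite (eqP c3) dvdn1.
set a := gcdn U t. set b := gcdn W t.
have Ua : U = a^2 := pow_of_coprime _ _ _ _ (isT : 0 < 2) cUW EW.
have Wb : W = b^2.
  apply: (pow_of_coprime _ _ _ _ (isT : 0 < 2) _ (etrans (mulnC W U) EW)).
  by rewrite coprime_sym.
have cab : coprime a b by move: cUW; rewrite Ua Wb coprime_pexpl // coprime_pexpr.
have eab : a^2 = b^2 + 3 * r^2 by rewrite -Ua -Wb /U /W; lia.
have [k rk] : exists k, r = 2 * k.
  by exists r./2; have := odd_double_half r; rewrite (negbTE re) add0n -muln2; lia.
have k0 : 0 < k by lia.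
have ao : odd a.
  have : odd (a^2) by rewrite -Ua /U oddD rk !oddX oddM /= so.
  by rewrite oddX.
have bo : odd b.
  have : odd (b^2) by rewrite -Wb /W oddB // rk !oddX !oddM /= so.
  by rewrite oddX.
clearbody a b.
have ba : b <= a by rewrite -(leq_exp2r _ _ (isT : 0 < 2)) eab leq_addr.
have Ea := halfE a b ba (etrans ao (esym bo)).
move: ((a - b)./2) Ea => x Ea.
set y := b + x.
have Exy : x * y = 3 * k^2.
  have h : (b + 2 * x)^2 = b^2 + 3 * (2 * k)^2 by rewrite -Ea -rk.
  rewrite /y; clear -h; nia.
have cxy : coprime x y.
  have dx : gcdn x y %| x by apply: dvdn_gcdl.
  have dy : gcdn x y %| y by apply: dvdn_gcdr.
  have db : gcdn x y %| b by rewrite -(dvdn_addr _ dx) addnC.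
  have da : gcdn x y %| a by rewrite Ea mul2n -addnn addnA; apply: dvdn_add.
  have : gcdn x y %| gcdn a b by rewrite dvdn_gcd da db.
  by rewrite (eqP cab) dvdn1.
have axy : a = x + y by rewrite /y Ea; lia.
clearbody y.
have [p [q [ap kpq cpq q3]]] : exists p q,
    [/\ a = 3 * p^2 + q^2, k = p * q, coprime p q & ~~ (3 %| q)].
  have : 3 %| x * y by rewrite Exy dvdn_mulr.
  rewrite Euclid_dvdM // => /orP[h3|h3].
  - have [p [q [xp yq kpq cpq]]] := splitc _ _ _ _ _ (isT : 0 < 3) (isT : 0 < 2) cxy Exy h3.
    exists p, q; split => //; first by rewrite axy xp yq.
    apply/negP => hq.
    have : 3 %| gcdn x y by rewrite dvdn_gcd xp yq dvdn_mulr // dvdn_exp.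
    by rewrite (eqP cxy).
  - have cyx : coprime y x by rewrite coprime_sym.
    have Eyx : y * x = 3 * k^2 by rewrite mulnC.
    have [p [q [yp xq kpq cpq]]] := splitc _ _ _ _ _ (isT : 0 < 3) (isT : 0 < 2) cyx Eyx h3.
    exists p, q; split => //; first by rewrite axy xq yp addnC.
    apply/negP => hq.
    have : 3 %| gcdn y x by rewrite dvdn_gcd yp xq dvdn_mulr // dvdn_exp.
    by rewrite (eqP cyx).
have p0 : 0 < p by move: k0; rewrite kpq muln_gt0 => /andP[].
have q0 : 0 < q by move: k0; rewrite kpq muln_gt0 => /andP[].
have [A EA] : exists A, A = p^2 + q^2 by exists (p^2 + q^2).
have sA : s^2 = A^2 + 8 * p^4.
  have h1 : r^2 + s^2 = (3 * p^2 + q^2)^2 by rewrite -ap -Ua.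
  rewrite rk kpq in h1; rewrite EA; clear -h1; nia.
have Ao : odd A.
  have : odd (3 * p^2 + q^2) by rewrite -ap.
  by rewrite EA !oddD oddM !oddX /=; case: (odd p); case: (odd q).
have As : A < s.
  rewrite -(ltn_exp2r _ _ (isT : 0 < 2)) sA.
  have : 0 < p^4 by rewrite expn_gt0 p0.
  lia.
have Es := halfE s A (ltnW As) (etrans so (esym Ao)).
move: ((s - A)./2) Es => X Es.
have [Y EY] : exists Y, Y = A + X by exists (A + X).
have EXY : X * Y = 2 * p^4.
  have h : (A + 2 * X)^2 = A^2 + 8 * p^4 by rewrite -Es.
  rewrite EY; clear -h; nia.
have cAp : coprime A p.
  rewrite coprime_sym /coprime EA -(mulnn p) gcdnMDl.
  by rewrite -/(coprime p (q^2)) coprime_pexpr.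
have csA : coprime s A.
  set g := gcdn s A.
  have gs : g %| s by apply: dvdn_gcdl.
  have gA : g %| A by apply: dvdn_gcdr.
  have g8 : g %| 8 * p^4.
    have : g %| s^2 by rewrite dvdn_exp.
    by rewrite sA dvdn_addr // dvdn_exp.
  have cg2 : coprime g 2.
    rewrite coprime_sym prime_coprime // dvdn2 negbK.
    apply/negPn/negP => ge.
    have : 2 %| s by apply: dvdn_trans gs; rewrite dvdn2.
    by rewrite dvdn2 so.
  have cgp : coprime g (8 * p^4).
    rewrite coprimeMr; apply/andP; split.
      by rewrite (_ : 8 = 2^3) // coprimeXr.
    by apply: coprimeXr; apply: coprime_dvdl cAp.
  have : g %| gcdn g (8 * p^4) by rewrite dvdn_gcd dvdnn g8.
  by rewrite (eqP cgp) dvdn1.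
have cXY : coprime X Y.
  set g := gcdn X Y.
  have gX : g %| X by apply: dvdn_gcdl.
  have gY : g %| Y by apply: dvdn_gcdr.
  have gA : g %| A by move: gY; rewrite EY dvdn_addl.
  have gs : g %| s by rewrite Es dvdn_add // dvdn_mull.
  have : g %| gcdn s A by rewrite dvdn_gcd gs gA.
  by rewrite (eqP csA) dvdn1.
have : 2 %| X * Y by rewrite EXY dvdn_mulr.
rewrite Euclid_dvdM // => /orP[h2|h2].
- have [m [n [Xm Yn pmn cmn]]] := splitc _ _ _ _ _ (isT : 0 < 2) (isT : 0 < 4) cXY EXY h2.
  have n0 : 0 < n by move: p0; rewrite pmn muln_gt0 => /andP[].
  have m0 : 0 < m by move: p0; rewrite pmn muln_gt0 => /andP[].
  apply: (IH m n q).
  - have : m < r.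
      rewrite rk kpq pmn -mulnA.
      have nq : 0 < n * q by rewrite muln_gt0 n0 q0.
      have := leq_pmulr m nq; clear -m0; lia.
    clear -rN; lia.
  - exact: m0.
  - exact: cmn.
  - have : n^4 = p^2 + q^2 + 2 * m^4 by rewrite -Yn EY EA Xm.
    rewrite pmn; clear; nia.
- have cYX : coprime Y X by rewrite coprime_sym.
  have EYX : Y * X = 2 * p^4 by rewrite mulnC.
  have [m [n [Ym Xn pmn cmn]]] := splitc _ _ _ _ _ (isT : 0 < 2) (isT : 0 < 4) cYX EYX h2.
  apply: (mod3_desc q m n q3).
  have : 2 * m^4 = p^2 + q^2 + n^4 by rewrite -Ym EY EA Xn.
  rewrite pmn; clear; nia.
Qed.

Lemma ns3 (Z M : nat) : ~~ (3 %| Z) -> 3 * Z <> M^2.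
Proof.
move=> hZ E.
have : 3 %| M^2 by rewrite -E dvdn_mulr.
rewrite Euclid_dvdX // andbT => /dvdnP[K MK].
move: E; rewrite MK => E.
have : Z = 3 * K^2 by apply/eqP; rewrite -(eqn_pmul2l (isT : 0 < 3)) E; apply/eqP; ring.
by move=> ZK; move: hZ; rewrite ZK dvdn_mulr.
Qed.

Lemma nsuv (R S V M : nat) : 0 < R -> coprime R S ->
  (V + S^2 = 2 * R^2 \/ V + 2 * R^2 = S^2) -> (R^2 + S^2) * V <> M^2.
Proof.
move=> R0 cRS [h|h] E.
- have odd2 : odd R || odd S.
    case: (boolP (odd R)) => //= hR; apply/negPn/negP => hS.
    move: cRS; rewrite /coprime => /eqP g1.
    have : 2 %| gcdn R S by rewrite dvdn_gcd !dvdn2 hR hS.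
    by rewrite g1.
  apply: (mod4_plus R S M odd2).
  clear -h E; nia.
- apply: (descent R R S M (leqnn R) R0 cRS).
  clear -h E; nia.
Qed.


Lemma sqdiv (c z m : nat) : 0 < z -> c * z^2 = m^2 -> exists K, c = K^2.
Proof.
move=> z0 E.
have : z^2 %| m^2 by rewrite -E dvdn_mull.
rewrite dvdn_pexp2r // => /dvdnP[K mK].
exists K; apply/eqP; rewrite -(eqn_pmul2r (_ : 0 < z^2)) ?expn_gt0 ?z0 //.
by rewrite E mK expnMn.
Qed.

Local Open Scope ring_scope.

Lemma intsq (c z m : int) : z != 0 -> c * z^+2 = m^+2 -> exists K : int, c = K^+2.
Proof.
move=> z0 E.
have E' : (`|c| * `|z|^2 = `|m|^2)%N by rewrite -!abszX -abszM E.
have [K cK] : exists K, `|c|%N = (K^2)%N.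
  by apply: (sqdiv _ _ _ _ E'); rewrite absz_gt0.
exists K%:Z.
have c0 : 0 <= c.
  have z2 : 0 < z^+2 by rewrite exprn_even_gt0 // z0.
  by rewrite -(pmulr_lge0 _ z2) E sqr_ge0.
rewrite -(gez0_abs c0) cK; lia.
Qed.

Lemma sqeq_int (x y : int) : sq_equiv x%:~R y%:~R -> exists m : int, x * y = m^+2.
Proof.
move=> [q [q0 E]].
set Q : rat := y%:~R * q.
have EQ : (x * y)%:~R = Q ^+ 2 :> rat by rewrite /Q intrM E; ring.
have d0 : denq Q != 0 by rewrite gt_eqF ?denq_gt0.
apply: (intsq _ _ (numq Q) d0).
apply: (@intr_inj rat); rewrite intrM EQ !rmorphXn /= numqE; ring.
Qed.
Local Open Scope ring_scope.

Notation uu r s := (r ^+ 2 + s ^+ 2).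
Notation vv r s := (2 * r ^+ 2 - s ^+ 2).
Notation ww r s := (uu r s - vv r s).

Lemma kill (c z xy m : int) : xy = c * z^+2 -> z != 0 -> (forall K : int, c <> K^+2) ->
  xy <> m^+2.
Proof. move=> -> z0 ns E; have [K cK] := intsq _ _ _ z0 E; exact: ns cK. Qed.

Lemma ns_abs (c : int) : (forall M : nat, `|c|%N <> (M^2)%N) -> forall K : int, c <> K^+2.
Proof. by move=> h K E; apply: (h `|K|%N); rewrite E abszX. Qed.

Lemma ns_m1 : forall K : int, -1 <> K^+2.
Proof. move=> K E; have := sqr_ge0 K; rewrite -E; lia. Qed.

Lemma sq_abs (r : int) : r ^+ 2 = ((`|r| ^ 2)%N : int).
Proof. by rewrite -abszX gez0_abs // sqr_ge0. Qed.

Lemma facts (r s : int) : coprimez r s -> r != 0 ->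
  (forall K : int, 3 * ww r s <> K^+2) /\ (forall K : int, - (3 * ww r s) <> K^+2) /\
  (forall K : int, uu r s * vv r s <> K^+2) /\ (forall K : int, - (uu r s * vv r s) <> K^+2) /\
  (forall K : int, 3 * uu r s * vv r s * ww r s <> K^+2) /\
  (forall K : int, - (3 * uu r s * vv r s * ww r s) <> K^+2) /\
  (uu r s != 0 /\ vv r s != 0 /\ ww r s != 0 /\ uu r s + vv r s != 0).
Proof.
move=> crs r0.
have cRS : coprime `|r| `|s| by [].
have R0 : (0 < `|r|)%N by rewrite absz_gt0.
set R := `|r|%N in cRS R0. set S := `|s|%N in cRS.
have hr : r ^+ 2 = ((R^2)%N : int) by rewrite sq_abs.
have hs : s ^+ 2 = ((S^2)%N : int) by rewrite sq_abs.
have n3 : ~~ (3 %| R)%N || ~~ (3 %| S)%N.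
  rewrite -negb_and; apply/negP => /andP[h1 h2].
  move: cRS; rewrite /coprime => /eqP g1.
  have : (3 %| gcdn R S)%N by rewrite dvdn_gcd h1 h2.
  by rewrite g1.
have n3' : ~~ (3 %| S)%N || ~~ (3 %| R)%N by rewrite orbC.
have Uabs : `|uu r s|%N = (R^2 + S^2)%N.
  by rewrite hr hs -PoszD absz_nat.
set V := `|vv r s|%N. set W := `|ww r s|%N.
have hV : (V + S^2 = 2 * R^2 \/ V + 2 * R^2 = S^2)%N.
  rewrite /V hr hs; move: (R^2)%N (S^2)%N => a b.
  case: (lerP 0 (2 * a%:Z - b%:Z)) => h.
  - left; have := gez0_abs h; lia.
  - right; have := ltz0_abs h; lia.
have hW : (W + R^2 = 2 * S^2 \/ W + 2 * S^2 = R^2)%N.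
  rewrite /W hr hs; move: (R^2)%N (S^2)%N => a b.
  case: (lerP 0 (a%:Z + b%:Z - (2 * a%:Z - b%:Z))) => h.
  - left; have := gez0_abs h; lia.
  - right; have := ltz0_abs h; lia.
have hU3 := mod3_u R S n3.
have hV3 := mod3_v R S V n3 hV.
have hW3 := mod3_v S R W n3' hW.
have V0 : (0 < V)%N by case: (posnP V) hV3 => [->|].
have W0 : (0 < W)%N by case: (posnP W) hW3 => [->|].
have hUVW : ~~ (3 %| (R^2 + S^2) * (V * W))%N by rewrite !Euclid_dvdM // !negb_or hU3 hV3 hW3.
split; [|split; [|split; [|split; [|split; [|split]]]]].
- apply: ns_abs => M; rewrite abszM -/W; exact: ns3 W M hW3.
- apply: ns_abs => M; rewrite abszN abszM -/W; exact: ns3 W M hW3.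
- apply: ns_abs => M; rewrite abszM Uabs -/V; exact: nsuv R S V M R0 cRS hV.
- apply: ns_abs => M; rewrite abszN abszM Uabs -/V; exact: nsuv R S V M R0 cRS hV.
- apply: ns_abs => M; rewrite !abszM Uabs -/V -/W (_ : `|3%R|%N = 3%N) // -!mulnA; exact: ns3 _ M hUVW.
- apply: ns_abs => M; rewrite abszN !abszM Uabs -/V -/W (_ : `|3%R|%N = 3%N) // -!mulnA; exact: ns3 _ M hUVW.
- split; [|split; [|split]].
  + by rewrite -absz_gt0 Uabs addn_gt0 expn_gt0 R0.
  + by rewrite -absz_gt0.
  + by rewrite -absz_gt0.
  + have -> : uu r s + vv r s = 3 * r^+2 by ring.
    by rewrite mulf_neq0 // expf_neq0.
Qed.

Ltac nzt := first [assumption | by rewrite mulf_neq0 | by rewrite mulf_neq0 // expf_neq0].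

Ltac killit r s :=
  first [
    apply: (kill (-1) (uu r s * (uu r s + vv r s))); [ring | nzt | exact: ns_m1]
  | apply: (kill (-1) (uu r s * (uu r s - vv r s))); [ring | nzt | exact: ns_m1]
  | apply: (kill (-1) (vv r s * (uu r s + vv r s))); [ring | nzt | exact: ns_m1]
  | apply: (kill (-1) (vv r s * (uu r s - vv r s))); [ring | nzt | exact: ns_m1]
  | apply: (kill (3 * ww r s) (uu r s * r)); [ring | nzt | assumption]
  | apply: (kill (- (3 * ww r s)) (uu r s * r)); [ring | nzt | assumption]
  | apply: (kill (3 * ww r s) (vv r s * r)); [ring | nzt | assumption]
  | apply: (kill (- (3 * ww r s)) (vv r s * r)); [ring | nzt | assumption]
  | apply: (kill (uu r s * vv r s) (3 * r ^+ 2)); [ring | nzt | assumption]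
  | apply: (kill (- (uu r s * vv r s)) (3 * r ^+ 2)); [ring | nzt | assumption]
  | apply: (kill (uu r s * vv r s) (ww r s)); [ring | nzt | assumption]
  | apply: (kill (- (uu r s * vv r s)) (ww r s)); [ring | nzt | assumption]
  | apply: (kill (3 * uu r s * vv r s * ww r s) (r)); [ring | nzt | assumption]
  | apply: (kill (- (3 * uu r s * vv r s * ww r s)) (r)); [ring | nzt | assumption]
  ].

Lemma pairs (r s : int) : coprimez r s -> r != 0 ->
  forall i j : nat, (i < 8)%N -> (j < 8)%N -> i != j -> forall m : int,
  nth 0 (S_list r s) i * nth 0 (S_list r s) j <> m ^+ 2.
Proof.
move=> crs r0.
have [h1 [h2 [h3 [h4 [h5 [h6 [nu [nv [nw npl]]]]]]]]] := facts r s crs r0.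
have n3 : (3 : int) != 0 by [].
have n3r : 3 * r ^+ 2 != 0 by rewrite mulf_neq0 // expf_neq0.
move=> i j hi hj hij m.
rewrite /S_list /=.
case: i hi hij => [|[|[|[|[|[|[|[|i]]]]]]]] // _;
case: j hj => [|[|[|[|[|[|[|[|j]]]]]]]] // _ _; rewrite /=; killit r s.
Qed.

Theorem lemma6p2 :
  exists bad : seq (int * int),
    forall r s : int, coprimez r s -> r != 0 ->
      ~ distinct_sq_classes (map (fun z : int => z%:~R : rat) (S_list r s)) ->
      (r, s) \in bad.
Proof.
exists [::] => r s crs r0 H; exfalso; apply: H.
have [_ [_ [_ [_ [_ [_ [nu [nv [nw npl]]]]]]]]] := facts r s crs r0.
split.
- move=> x /mapP[z zin ->]; rewrite intr_eq0.
  have all0 : all (fun z => z != 0) (S_list r s).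
    by rewrite /S_list /= !oppr_eq0 !mulf_neq0.
  by move/allP: all0 => /(_ z zin).
- move=> i j; rewrite size_map => hi hj hij Hs.
  rewrite !(nth_map 0) // in Hs.
  have [m Hm] := sqeq_int _ _ Hs.
  exact: (pairs r s crs r0 i j hi hj hij m Hm).
Qed.
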